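(* Let $G$ be a finite group. For each conjugacy class $[H]\in\overline{P}(G)$ and each $\sigma=(\delta_\sigma,\theta_\sigma)\in\Sigma_{[H]}$ let $\bigl(b_n^{[H]_\sigma}\bigr)_{n=1}^\infty$ be a sequence of non-negative integers, such that $b_1^{[G]_{(1,1)}}\geqslant1$. Define \[ a_n^{[H]_\sigma}=\begin{cases}\theta_\sigma\, b^{[H]_\sigma}_{n/\delta_\sigma}, & \text{if }\delta_\sigma\mid n,\\ 0,&\text{otherwise},\end{cases} \qquad a_n=\sum_{[H]\in\overline{P}(G)}\sum_{\sigma\in\Sigma_{[H]}}a_n^{[H]_\sigma},\qquad b_n=\sum_{[H]\in\overline{P}(G)}\sum_{\sigma\in\Sigma_{[H]}}b_n^{[H]_\sigma}, \] for all $n\geqslant1$. Then there exist a compact metric space $X$, a homeomorphism $T:X\to X$, and a continuous action of $G$ on $X$ commuting with $T$ such that $O_n(T)=a_n$ and $O_n(T')=b_n$ for all $n\geqslant1$, where $(X',T')$ is the quotient system of $(X,T)$ under $G$.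
   Context: $\overline{P}(G)$ is the set of conjugacy classes $[H]=\{gHg^{-1}:g\in G\}$ of subgroups $H\leqslant G$. $N_G(H)=\{g\in G:gHg^{-1}=H\}$. For a finite group $K$, $\Delta(K)=\{|\langle h\rangle|:h\in K\}$. For $[H]\in\overline{P}(G)$ (with a representative $H$), $\Sigma_{[H]}=\{(\delta,\theta):\delta\in\Delta(N_G(H)/H),\ \theta=[G:H]/\delta\}$; in particular $\Sigma_{[G]}=\{(1,1)\}$. The quotient system: $X'=G\backslash X=\{\mathfrak{O}_G(x):x\in X\}$, $\mathfrak{O}_G(x)=\{g(x):g\in G\}$, with metric $d'(\mathfrak{O}_G(x),\mathfrak{O}_G(y))=\min\{d(x',y'):x'\in\mathfrak{O}_G(x),y'\in\mathfrak{O}_G(y)\}$ and $T'(\mathfrak{O}_G(x))=\mathfrak{O}_G(T(x))$. For a map $S$, $O_n(S)$ is the number of closed orbits $\{x,S(x),\dots,S^{n-1}(x)\}$ of cardinality exactly $n$. *)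

(* Defs.v *)
From Stdlib Require Import Reals List.
From mathcomp Require Import all_boot all_fingroup.
Set Implicit Arguments. Unset Strict Implicit. Unset Printing Implicit Defensive.

Definition is_metric (X : Type) (d : X -> X -> R) : Prop :=
  (forall x y, d x y = R0 <-> x = y) /\
  (forall x y, d x y = d y x) /\
  (forall x y z, Rle (d x z) (Rplus (d x y) (d y z))).

Definition m_open (X : Type) (d : X -> X -> R) (U : X -> Prop) : Prop :=
  forall x, U x -> exists e, Rlt R0 e /\ forall y, Rlt (d x y) e -> U y.

Definition m_compact (X : Type) (d : X -> X -> R) : Prop :=
  forall (I : Type) (U : I -> X -> Prop),
    (forall i, m_open d (U i)) -> (forall x, exists i, U i x) ->
    exists l : list I, forall x, exists i, In i l /\ U i x.

Definition m_continuous (X : Type) (d : X -> X -> R) (f : X -> X) : Prop :=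
  forall x e, Rlt R0 e -> exists del, Rlt R0 del /\
    forall y, Rlt (d x y) del -> Rlt (d (f x) (f y)) e.

Definition m_homeomorphism (X : Type) (d : X -> X -> R) (T : X -> X) : Prop :=
  exists Tinv : X -> X, cancel T Tinv /\ cancel Tinv T /\
    m_continuous d T /\ m_continuous d Tinv.

Definition commuting_action (gT : finGroupType) (X : Type) (d : X -> X -> R)
    (act : gT -> X -> X) (T : X -> X) : Prop :=
  (forall x, act 1%g x = x) /\
  (forall g h x, act (g * h)%g x = act g (act h x)) /\
  (forall g, m_continuous d (act g)) /\
  (forall g x, act g (T x) = T (act g x)).

Definition card_eq (Y : Type) (P : Y -> Prop) (k : nat) : Prop :=
  exists f : 'I_k -> Y, injective f /\ forall y, P y <-> exists i, f i = y.

Definition orbit_set (Y : Type) (S : Y -> Y) (x : Y) (n : nat) : Y -> Prop :=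
  fun y => exists k, (k < n)%N /\ y = iter k S x.

Definition closed_orbit (Y : Type) (D : Y -> Prop) (S : Y -> Y) (n : nat)
    (A : Y -> Prop) : Prop :=
  exists x, D x /\ iter n S x = x /\ A = orbit_set S x n /\ card_eq A n.

(* O_n(S) = k  (for S restricted to the invariant domain D) *)
Definition On_eq (Y : Type) (D : Y -> Prop) (S : Y -> Y) (n k : nat) : Prop :=
  card_eq (closed_orbit D S n) k.

Definition Gorbit (gT : finGroupType) (X : Type) (act : gT -> X -> X) (x : X)
  : X -> Prop := fun y => exists g : gT, y = act g x.

Definition is_Gorbit (gT : finGroupType) (X : Type) (act : gT -> X -> X)
  (A : X -> Prop) : Prop := exists x, A = Gorbit act x.

(* T' on orbits: T'(O(x)) = T(O(x)) = O(T x) *)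
Definition quotT (X : Type) (T : X -> X) (A : X -> Prop) : X -> Prop :=
  fun y => exists x, A x /\ y = T x.

(* \overline{P}(G), G = [set: gT]: conjugacy classes of subgroups *)
Definition Pbar (gT : finGroupType) : {set {set {set gT}}} :=
  [set ((gval H) :^: [set: gT])%g | H : {group gT}].

Definition rep (gT : finGroupType) (C : {set {set gT}}) : {group gT} :=
  odflt 1%G [pick H : {group gT} | (H :^: [set: gT])%g == C].

Definition Delta (gT : finGroupType) (H : {group gT}) : seq nat :=
  undup [seq #[x]%g | x <- enum ('N_([set: gT])(H) / H)%g].

Definition theta (gT : finGroupType) (H : {group gT}) (delta : nat) : nat :=
  #|[set: gT] : H|%g %/ delta.

Definition seq_a (gT : finGroupType) (b : {set {set gT}} -> nat -> nat -> nat)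
    (n : nat) : nat :=
  \sum_(C in Pbar gT) \sum_(delta <- Delta (rep C))
     (if delta %| n then theta (rep C) delta * b C delta (n %/ delta) else 0).

Definition seq_b (gT : finGroupType) (b : {set {set gT}} -> nat -> nat -> nat)
    (n : nat) : nat :=
  \sum_(C in Pbar gT) \sum_(delta <- Delta (rep C)) b C delta n.

(* Main.v *)
Require Import Defs.
From Stdlib Require Import Reals Lra List ClassicalEpsilon FunctionalExtensionality PropExtensionality.
From mathcomp Require Import all_boot all_fingroup all_solvable.
From mathcomp Require Import zify.
Set Implicit Arguments. Unset Strict Implicit.

Lemma card_eq_fin (Y : Type) (F : finType) (f : F -> Y) (P : Y -> Prop) :
  injective f -> (forall y, P y <-> exists i, f i = y) -> card_eq P #|F|.
Proof.
move=> injf HP; exists (fun k : 'I_#|F| => f (enum_val k)); split.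
  by move=> a c /injf /enum_val_inj.
move=> y; rewrite HP; split=> [[i <-]|[k <-]]; last by exists (enum_val k).
by exists (enum_rank i); rewrite enum_rankK.
Qed.

Lemma iter_mod (Y : Type) (S : Y -> Y) (x : Y) t s :
  iter t S x = x -> iter s S x = iter (s %% t) S x.
Proof.
move=> Ht; rewrite {1}(divn_eq s t) addnC iterD.
suff -> : iter (s %/ t * t) S x = x by [].
elim: (s %/ t) => [|q IH] //=; by rewrite mulSn iterD IH Ht.
Qed.

Lemma orbit_card (Y : Type) (S : Y -> Y) (x : Y) n :
  iter n S x = x -> (forall t, 0 < t < n -> iter t S x <> x) ->
  card_eq (orbit_set S x n) n.
Proof.
move=> Hn Hex.
have inj: injective (fun k : 'I_n => iter k S x).
  move=> a c /= E; apply/val_inj/eqP; apply/negPn/negP => Hne.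
  wlog lt : a c E Hne / a < c.
    move=> W; case: (ltngtP a c) => h; first exact: (W a c).
    - by apply: (W c a) => //; rewrite eq_sym.
    - by move: Hne; rewrite (val_inj h) eqxx.
  have: iter (n - c + a) S x = x.
    by rewrite iterD E -iterD subnK ?Hn // ltnW.
  apply: Hex; have := ltn_ord c; lia.
exists (fun k : 'I_n => iter k S x); split => // y; split.
  by case=> k [kn ->]; exists (Ordinal kn).
by case=> k <-; exists k; split.
Qed.

Lemma card_eq_uniq_inj (Y : Type) (P : Y -> Prop) n t (g : nat -> Y) :
  card_eq P n -> (forall y, P y -> exists s, s < t /\ y = g s) -> n <= t.
Proof.
case=> f [injf Hf] Hg.
have H1 : forall k : 'I_n, {s : 'I_t | f k = g s}.
  move=> k; apply: constructive_indefinite_description.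
  have [s [st ->]] := Hg _ ((proj2 (Hf (f k))) (ex_intro _ k erefl)).
  by exists (Ordinal st).
have : injective (fun k => proj1_sig (H1 k)).
  move=> a c E; apply: injf; rewrite (proj2_sig (H1 a)) (proj2_sig (H1 c)) E //.
by move/leq_card; rewrite !card_ord.
Qed.

Lemma card_exact (Y : Type) (S : Y -> Y) (x : Y) n :
  card_eq (orbit_set S x n) n -> forall t, 0 < t < n -> iter t S x <> x.
Proof.
move=> Hc t /andP[t0 tn] Ht.
have: n <= t; last by lia.
apply: (@card_eq_uniq_inj _ _ n t (fun s => iter s S x)) Hc _ => y [k [_ ->]].
exists (k %% t); split; first by rewrite ltn_mod.
exact: iter_mod.
Qed.

Lemma iter_mul_fix (Y : Type) (S : Y -> Y) (x : Y) n q :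
  iter n S x = x -> iter (q * n) S x = x.
Proof. by move=> Hn; elim: q => [|q IH] //=; rewrite mulSn iterD IH Hn. Qed.

Lemma iter_comm (Y : Type) (S : Y -> Y) (x : Y) a c :
  iter a S (iter c S x) = iter c S (iter a S x).
Proof. by rewrite -!iterD addnC. Qed.

Lemma orbit_shift (Y : Type) (S : Y -> Y) (x : Y) n t :
  0 < n -> iter n S x = x -> orbit_set S (iter t S x) n = orbit_set S x n.
Proof.
move=> n0 Hn; apply: functional_extensionality => y.
apply: propositional_extensionality; split.
  case=> k [kn ->]; exists ((k + t) %% n); split; first by rewrite ltn_mod.
  by rewrite -iterD; apply: iter_mod.
have Hn' : iter n S (iter t S x) = iter t S x by rewrite iter_comm Hn.
case=> k [kn ->]; exists ((k + (n.-1) * t) %% n); split; first by rewrite ltn_mod.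
rewrite -(@iter_mod _ S (iter t S x) n _ Hn') -iterD -addnA.
have -> : (n.-1 * t + t) = t * n by rewrite -mulSnr prednK // mulnC.
by rewrite iterD iter_mul_fix.
Qed.

Lemma period_count (Y : Type) (D : Y -> Prop) (S : Y -> Y) (n : nat)
  (F : finType) (phi : F -> Y) :
  0 < n ->
  (forall i, D (phi i)) ->
  (forall i, iter n S (phi i) = phi i) ->
  (forall i t, 0 < t < n -> iter t S (phi i) <> phi i) ->
  (forall i i' t, iter t S (phi i) = phi i' -> i = i') ->
  (forall y, D y -> iter n S y = y -> (forall t, 0 < t < n -> iter t S y <> y) ->
     exists i t, y = iter t S (phi i)) ->
  On_eq D S n #|F|.
Proof.
move=> n0 HD Hper Hex Hdis Hall.
apply: (@card_eq_fin _ F (fun i => orbit_set S (phi i) n)).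
  move=> i i' E.
  have : orbit_set S (phi i) n (phi i').
    by rewrite E; exists 0; split.
  by case=> t [_ Ht]; apply: (Hdis i i' t); rewrite Ht.
move=> A; split.
  case=> x [Dx [Hx [-> Hc]]].
  have [i [t ->]] := Hall x Dx Hx (@card_exact _ S x n Hc).
  by exists i; rewrite orbit_shift.
case=> i <-; exists (phi i); split; first exact: HD.
split; first exact: Hper. split; first by [].
exact: (@orbit_card _ S (phi i) n (Hper i) (Hex i)).
Qed.

Section Model.
Local Notation rep := Defs.rep.
Local Notation Delta := Defs.Delta.
Local Notation theta := Defs.theta.
Variable gT : finGroupType.
Variable b : {set {set gT}} -> nat -> nat -> nat.
Local Open Scope group_scope.

Definition ucos (C : {set {set gT}}) (d : nat) : coset_of (rep C) :=
  odflt 1 [pick x in ('N_([set: gT])(rep C) / rep C)%g | #[x] == d].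
Definition uu C d : gT := repr (ucos C d).

Lemma uu_norm C d : uu C d \in 'N(rep C).
Proof. exact: repr_coset_norm. Qed.

Lemma uu_order C d : d \in Delta (rep C) -> #[coset (rep C) (uu C d)] = d.
Proof.
rewrite /Delta mem_undup => /mapP [x]; rewrite mem_enum => xin ->.
rewrite /uu coset_reprK /ucos; case: pickP => [y /andP[_ /eqP] //|].
by move/(_ x); rewrite xin eqxx.
Qed.

Definition Pre := ({set {set gT}} * nat * nat * nat * {set gT} * nat)%type.
Definition pC (p : Pre) := p.1.1.1.1.1.
Definition pd (p : Pre) := p.1.1.1.1.2.
Definition pm (p : Pre) := p.1.1.1.2.
Definition pj (p : Pre) := p.1.1.2.
Definition pA (p : Pre) := p.1.2.
Definition pi (p : Pre) := p.2.

Definition valid (p : Pre) : bool :=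
  [&& pC p \in Pbar gT, pd p \in Delta (rep (pC p)), 0 < pm p,
      pj p < b (pC p) (pd p) (pm p),
      pA p \in lcosets (rep (pC p)) [set: gT] & pi p < pm p].

Definition up (p : Pre) := uu (pC p) (pd p).

Definition Tp (p : Pre) : Pre :=
  if (pi p).+1 < pm p then (p.1, (pi p).+1) else (p.1.1, pA p :* up p, 0).
Definition Tip (p : Pre) : Pre :=
  if 0 < pi p then (p.1, (pi p).-1) else (p.1.1, pA p :* (up p)^-1, (pm p).-1).
Definition actp (g : gT) (p : Pre) : Pre := (p.1.1, g *: pA p, pi p).

Lemma lcos_r (H : {group gT}) A x : x \in 'N(H) ->
  A \in lcosets H [set: gT] -> A :* x \in lcosets H [set: gT].
Proof.
move=> xN /lcosetsP [a _ ->]; apply/lcosetsP; exists (a * x); first by [].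
by rewrite lcosetM -mulgA norm_rlcoset.
Qed.

Lemma lcos_l (H : {group gT}) A g :
  A \in lcosets H [set: gT] -> g *: A \in lcosets H [set: gT].
Proof.
move=> /lcosetsP [a _ ->]; apply/lcosetsP; exists (g * a); first by [].
by rewrite lcosetM.
Qed.

Lemma Tp_valid p : valid p -> valid (Tp p).
Proof.
case/and5P=> h1 h2 h3 h4 /andP[h5 h6]; rewrite /Tp.
case: ifP => h7; apply/and5P; split => //; rewrite /pi /pA /pC /pd /pm /pj /= in h1 h2 h3 h4 h5 h6 h7 *.
- by apply/andP.
- apply/andP; split => //; apply: lcos_r => //; exact: uu_norm.
Qed.

Lemma Tip_valid p : valid p -> valid (Tip p).
Proof.
case/and5P=> h1 h2 h3 h4 /andP[h5 h6]; rewrite /Tip.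
case: ifP => h7; apply/and5P; split => //; rewrite /pi /pA /pC /pd /pm /pj /= in h1 h2 h3 h4 h5 h6 h7 *.
- by apply/andP; split => //; lia.
- apply/andP; split; last by lia.
  apply: lcos_r => //; rewrite groupV; exact: uu_norm.
Qed.

Lemma actp_valid g p : valid p -> valid (actp g p).
Proof.
case/and5P=> h1 h2 h3 h4 /andP[h5 h6]; apply/and5P; split => //.
by apply/andP; split => //; apply: lcos_l.
Qed.

Lemma TipK p : valid p -> Tip (Tp p) = p.
Proof.
case: p => [[[[[C d] m] j] A] i].
case/and5P=> h1 h2 h3 h4 /andP[h5 h6].
rewrite /pi /pA /pC /pd /pm /pj /= in h1 h2 h3 h4 h5 h6 *.
rewrite /Tp /pi /pm /=; case: ifP => h7; rewrite /Tip /up /pi /pA /pC /pd /pm /pj /=.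
  by [].
by rewrite -rcosetM mulgV rcoset1; congr (_, _); lia.
Qed.

Lemma TpK p : valid p -> Tp (Tip p) = p.
Proof.
case: p => [[[[[C d] m] j] A] i].
case/and5P=> h1 h2 h3 h4 /andP[h5 h6].
rewrite /pi /pA /pC /pd /pm /pj /= in h1 h2 h3 h4 h5 h6 *.
rewrite /Tip /pi /pm /=; case: ifP => h7; rewrite /Tp /up /pi /pA /pC /pd /pm /pj /=.
  by rewrite ifT; [congr (_, _); lia | lia].
rewrite ifF; last by lia.
by rewrite -rcosetM mulVg rcoset1; congr (_, _); lia.
Qed.

Lemma step_arith (m s : nat) : 0 < m ->
  ((s %% m).+1 < m -> s.+1 %/ m = s %/ m /\ s.+1 %% m = (s %% m).+1) /\
  (~~ ((s %% m).+1 < m) -> s.+1 %/ m = (s %/ m).+1 /\ s.+1 %% m = 0).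
Proof.
move=> m0; have E : s.+1 = s %/ m * m + (s %% m).+1 by rewrite addnS -divn_eq.
split => H.
  by rewrite E divnMDl // (divn_small H) addn0 modnMDl (modn_small H).
have E2 : (s %% m).+1 = m by have := ltn_pmod s m0; lia.
by rewrite E E2 -mulSnr mulnK // modnMl.
Qed.

Lemma Tp_iter C d m j A i k : 0 < m -> i < m ->
  iter k Tp (C, d, m, j, A, i) =
  (C, d, m, j, A :* uu C d ^+ ((i + k) %/ m), (i + k) %% m).
Proof.
move=> m0 im; elim: k => [|k IH].
  by rewrite /= addn0 divn_small // modn_small // expg0 rcoset1.
rewrite iterS IH /Tp /pi /pm /pA /up /pC /pd /= addnS.
have [H1 H2] := @step_arith m (i + k) m0.
case: ifP => h.
  by have [-> ->] := H1 h.
have [-> ->] := H2 (negbT h).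
by rewrite expgSr rcosetM.
Qed.

Lemma rcos_fix (H : {group gT}) A x : A \in lcosets H [set: gT] ->
  (A :* x == A) = (x \in H).
Proof.
case/lcosetsP => a _ ->; rewrite -mulgA; apply/eqP/idP => [/lcoset_inj E|xH].
  by have := rcoset_refl H x; rewrite E.
by rewrite rcoset_id.
Qed.

Lemma pow_inH C d c : d \in Delta (rep C) -> (uu C d ^+ c \in rep C) = (d %| c).
Proof.
move=> dD; transitivity (#[coset (rep C) (uu C d)] %| c); last by rewrite uu_order.
rewrite order_dvdn -morphX ?uu_norm //.
apply/idP/eqP => [h|h]; first exact: coset_id.
by apply: coset_idr => //; rewrite groupX // uu_norm.
Qed.

Lemma modeq i k m : i < m -> ((i + k) %% m == i) = (m %| k).
Proof.
move=> im; rewrite -{2}(modn_small im) -{2}(addn0 i) eqn_modDl mod0n.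
by [].
Qed.

Lemma Tp_period p k : valid p -> (iter k Tp p == p) = (pd p * pm p %| k).
Proof.
case: p => [[[[[C d] m] j] A] i].
case/and5P=> h1 h2 h3 h4 /andP[h5 h6].
rewrite /pi /pA /pC /pd /pm /pj /= in h1 h2 h3 h4 h5 h6 *.
rewrite Tp_iter // !xpair_eqE !eqxx /= (@rcos_fix (rep C) A _ h5) (@pow_inH C d _ h2) (@modeq i k m h6).
case: (boolP (m %| k)) => mk; last first.
  rewrite andbF; apply/esym/negP => /(dvdn_trans (dvdn_mull d (dvdnn m))).
  by rewrite (negbTE mk).
rewrite andbT -(divnK mk); set c := k %/ m.
by rewrite addnC divnMDl // divn_small // addn0 dvdn_pmul2r.
Qed.

Hypothesis hb : (1 <= b ([set: gT] :^: [set: gT]) 1 1)%N.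
Definition CG : {set {set gT}} := ([set: gT] :^: [set: gT]).

Lemma one_Delta (H : {group gT}) : 1%N \in Delta H.
Proof.
rewrite /Delta mem_undup; apply/mapP; exists 1; last by rewrite order1.
by rewrite mem_enum group1.
Qed.

Lemma CG_Pbar : CG \in Pbar gT.
Proof. by apply/imsetP; exists [set: gT]%G. Qed.

Lemma repCG : (rep CG : {set gT}) = [set: gT].
Proof.
rewrite /rep; case: pickP => [K /eqP EK | none] /=; last first.
  by have := none [set: gT]%G; rewrite eqxx.
have : (K : {set gT}) \in CG by rewrite -EK; apply/imsetP; exists 1; rewrite ?inE // conjsg1.
by case/imsetP => x _ ->; rewrite conjTg.
Qed.

Definition p0pre : Pre := (CG, 1%N, 1%N, 0%N, (rep CG : {set gT}), 0%N).

Lemma p0_valid : valid p0pre.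
Proof.
apply/and5P; split => //; rewrite /pC /pd /pm /pj /pA /pi /=.
- exact: CG_Pbar.
- exact: one_Delta.
- by apply/andP; split => //; apply/lcosetsP; exists 1; rewrite ?inE // lcoset1.
Qed.

Definition X := {p : Pre | valid p}.
Definition p0 : X := exist valid p0pre p0_valid.
Definition T (x : X) : X := exist valid (Tp (val x)) (@Tp_valid _ (valP x)).
Definition Ti (x : X) : X := exist valid (Tip (val x)) (@Tip_valid _ (valP x)).
Definition act (g : gT) (x : X) : X := exist valid (actp g (val x)) (@actp_valid g _ (valP x)).

Lemma TK : cancel T Ti.
Proof. by move=> x; apply: val_inj; rewrite /= (@TipK _ (valP x)). Qed.
Lemma TiK : cancel Ti T.
Proof. by move=> x; apply: val_inj; rewrite /= (@TpK _ (valP x)). Qed.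

Lemma T_p0 : T p0 = p0.
Proof.
apply: val_inj; rewrite /= /Tp /p0pre /pi /pm /= /pA /up /pC /pd /= repCG.
by rewrite (rcoset_id (G := [set: gT]%G)) ?inE.
Qed.
Lemma Ti_p0 : Ti p0 = p0.
Proof. by rewrite -{1}T_p0 TK. Qed.
Lemma act_p0 g : act g p0 = p0.
Proof.
apply: val_inj; rewrite /= /actp /p0pre /pA /pi /= repCG.
by rewrite (lcoset_id (G := [set: gT]%G)) ?inE.
Qed.

Lemma act1 x : act 1 x = x.
Proof.
apply: val_inj; case: x => [[[[[[C d] m] j] A] i] h].
by rewrite /= /actp /pA /pi /= lcoset1.
Qed.
Lemma actM g h x : act (g * h) x = act g (act h x).
Proof.
apply: val_inj; case: x => [[[[[[C d] m] j] A] i] hx].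
by rewrite /= /actp /pA /pi /= lcosetM.
Qed.
Lemma act_inj g : injective (act g).
Proof.
move=> x y E; by rewrite -(act1 x) -(act1 y) -(mulVg g) !actM E.
Qed.
Lemma actT g x : act g (T x) = T (act g x).
Proof.
apply: val_inj; case: x => [[[[[[C d] m] j] A] i] hx].
rewrite /= /actp /Tp /pA /pi /pm /up /pC /pd /=.
by case: ifP => _ //=; rewrite mulgA.
Qed.

Lemma val_iterT k x : val (iter k T x) = iter k Tp (val x).
Proof. by elim: k => [|k IH] //=; rewrite IH. Qed.

Definition lev (x : X) : nat := (pm (val x) + pj (val x))%N.
Lemma lev_T x : lev (T x) = lev x.
Proof. case: x => [[[[[[C d] m] j] A] i] hx]; rewrite /lev /= /Tp /pi /pm /pj /=; by case: ifP. Qed.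
Lemma lev_Ti x : lev (Ti x) = lev x.
Proof. case: x => [[[[[[C d] m] j] A] i] hx]; rewrite /lev /= /Tip /pi /pm /pj /=; by case: ifP. Qed.
Lemma lev_act g x : lev (act g x) = lev x.
Proof. by case: x => [[[[[[C d] m] j] A] i] hx]. Qed.

Definition w (x : X) : R := if x == p0 then R0 else Rinv (INR (lev x).+1).
Definition dist (x y : X) : R := if x == y then R0 else Rmax (w x) (w y).

Lemma w_gt0 x : x != p0 -> Rlt R0 (w x).
Proof.
rewrite /w => /negbTE ->; apply: Rinv_0_lt_compat; apply: lt_0_INR.
apply/ltP; by [].
Qed.
Lemma w_ge0 x : Rle R0 (w x).
Proof. case: (x =P p0) => [->|/eqP h]; first by rewrite /w eqxx; lra. by have := w_gt0 h; lra. Qed.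
Lemma dist_ge0 x y : Rle R0 (dist x y).
Proof. rewrite /dist; case: ifP => _; first lra. have := w_ge0 x; have := Rmax_l (w x) (w y); lra. Qed.

Lemma dist_metric : is_metric dist.
Proof.
split; [|split].
- move=> x y; rewrite /dist; split; last by move=> ->; rewrite eqxx.
  case: ifP => [/eqP //|/negbT ne E].
  case: (x =P p0) => [ex|/eqP nx].
    have ny : y != p0 by move: ne; rewrite ex eq_sym.
    by have := w_gt0 ny; have := Rmax_r (w x) (w y); lra.
  by have := w_gt0 nx; have := Rmax_l (w x) (w y); lra.
- by move=> x y; rewrite /dist eq_sym Rmax_comm.
- move=> x y z; have h1 := dist_ge0 x y; have h2 := dist_ge0 y z.
  rewrite {1}/dist; case: ifP => [_|xz]; first lra.
  case: (x =P y) => [<-|/eqP xy]; first by rewrite /dist xz eqxx /=; lra.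
  case: (y =P z) => [<-|/eqP yz]; first by rewrite /dist (negbTE xy) eqxx /=; lra.
  rewrite /dist (negbTE xy) (negbTE yz) /=.
  have := Rmax_l (w x) (w y); have := Rmax_r (w y) (w z); have := w_ge0 x; have := w_ge0 z.
  move=> *; apply: Rmax_lub; lra.
Qed.

Lemma dist_iso (f : X -> X) : injective f -> f p0 = p0 -> (forall x, lev (f x) = lev x) ->
  forall x y, dist (f x) (f y) = dist x y.
Proof.
move=> finj fp0 fl.
have fw : forall x, w (f x) = w x.
  move=> x; case: (x =P p0) => [->|/eqP nx]; first by rewrite fp0.
  rewrite /w (negbTE nx) ifF ?fl //; apply/eqP => E; move/eqP: nx; apply.
  by apply: finj; rewrite E fp0.
by move=> x y; rewrite /dist (inj_eq finj) !fw.
Qed.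

Lemma iso_cont (f : X -> X) : injective f -> f p0 = p0 -> (forall x, lev (f x) = lev x) ->
  m_continuous dist f.
Proof.
move=> finj fp0 fl x e e0; exists e; split => // y.
by rewrite dist_iso.
Qed.

Definition Dmax : nat := \max_(C : {set {set gT}}) \max_(d <- Delta (rep C)) d.

Lemma Delta_le (C : {set {set gT}}) (d : nat) : d \in Delta (rep C) -> d <= Dmax.
Proof.
move=> dD; apply: leq_trans (leq_bigmax C).
by apply: (@leq_bigmax_seq _ _ xpredT id d).
Qed.

Lemma mem_In (Y : eqType) (x : Y) (s : seq Y) : x \in s -> List.In x s.
Proof.
elim: s => [|a s IH] //=; rewrite in_cons => /orP[/eqP ->|h]; [by left|by right; apply: IH].
Qed.

Lemma finite_lev N : exists L : seq X, forall y, lev y < N -> y \in L.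
Proof.
pose FP := ({set {set gT}} * 'I_Dmax.+1 * 'I_N * 'I_N * {set gT} * 'I_N)%type.
pose emb (q : FP) : Pre := (q.1.1.1.1.1, val q.1.1.1.1.2, val q.1.1.1.2, val q.1.1.2, q.1.2, val q.2).
exists (pmap insub [seq emb q | q <- enum [set: ({set {set gT}} * 'I_Dmax.+1 * 'I_N * 'I_N * {set gT} * 'I_N)%type]]) => y; rewrite mem_pmap_sub.
case: y => [[[[[[C d] m] j] A] i] hy]; rewrite /lev /pm /pj /= => hl.
case/and5P: (hy) => _ h2 h3 _ /andP[_ h6]; rewrite /pC /pd /pm /pi /= in h2 h3 h6.
have hd : d < Dmax.+1 by rewrite ltnS; apply: Delta_le h2.
have hm : m < N by lia.
have hj : j < N by lia.
have hi : i < N by lia.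
apply/mapP; exists (C, Ordinal hd, Ordinal hm, Ordinal hj, A, Ordinal hi); first by rewrite mem_enum inE.
by [].
Qed.

Lemma dist_p0 x : dist p0 x = w x.
Proof.
rewrite /dist; case: (p0 =P x) => [<-|/eqP nx]; first by rewrite /w eqxx.
rewrite {1}/w eqxx; have := w_ge0 x; rewrite /Rmax; case: Rle_dec => //; lra.
Qed.

Lemma X_compact : m_compact dist.
Proof.
move=> I U Uo Ucov.
have [i0 Hi0] := Ucov p0.
have [e [e0 He]] := Uo i0 p0 Hi0.
have [N [HN N0]] := archimed_cor1 e e0.
have [L HL] := finite_lev N.
have cho : forall x, {i | U i x}.
  by move=> x; apply: constructive_indefinite_description; apply: Ucov.
exists (i0 :: List.map (fun x => proj1_sig (cho x)) L) => x.
case: (Rlt_le_dec (dist p0 x) e) => h.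
  by exists i0; split; [left | apply: He].
exists (proj1_sig (cho x)); split; last exact: (proj2_sig (cho x)).
right; apply: List.in_map; apply: mem_In; apply: HL.
rewrite dist_p0 in h.
case: (x =P p0) => [ex|/eqP nx]; first by move: h; rewrite ex /w eqxx; lra.
move: h; rewrite /w (negbTE nx) => h.
have Npos : Rlt R0 (INR N) by apply: lt_0_INR.
have : Rlt (INR (lev x).+1) (INR N).
  case: (Rlt_le_dec (INR (lev x).+1) (INR N)) => // h2.
  have := @Rinv_le_contravar _ _ Npos h2; lra.
move/INR_lt/ltP; lia.
Qed.

Definition key (p : Pre) := (p.1.1, p.2).

Lemma Gorbit_key x : Gorbit act x = (fun y => key (val y) = key (val x)).
Proof.
apply: functional_extensionality => y; apply: propositional_extensionality; split.
  by case=> g ->.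
case: x y => [[[[[[C d] m] j] A] i] hx] [[[[[[C' d'] m'] j'] A'] i'] hy].
rewrite /key /= => E; move: hy; case: E => -> -> -> -> -> hy.
case/and5P: (hx) => _ _ _ _ /andP[/lcosetsP[a _ EA] _].
case/and5P: (hy) => _ _ _ _ /andP[/lcosetsP[a' _ EA'] _].
rewrite /pA /pC /= in EA EA'.
exists (a' * a^-1); apply: val_inj; rewrite /= /actp /pA /pi /= EA EA'.
by rewrite -lcosetM mulgKV.
Qed.

Lemma Gorbit_eq x y : Gorbit act x = Gorbit act y <-> key (val x) = key (val y).
Proof.
rewrite !Gorbit_key; split => [E|->] //.
have H := equal_f E y; simpl in H; symmetry; by rewrite H.
Qed.

Lemma quot_step x : quotT T (Gorbit act x) = Gorbit act (T x).
Proof.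
apply: functional_extensionality => y; apply: propositional_extensionality; split.
  by case=> z [[g ->] ->]; exists g; rewrite actT.
by case=> g ->; exists (act g x); split; [exists g | rewrite actT].
Qed.

Lemma iter_quot k x : iter k (quotT T) (Gorbit act x) = Gorbit act (iter k T x).
Proof. by elim: k => [|k IH] //=; rewrite IH quot_step. Qed.

Lemma key_iter k x : key (val (iter k T x)) = ((val x).1.1, (pi (val x) + k) %% pm (val x)).
Proof.
rewrite val_iterT; case: x => [[[[[[C d] m] j] A] i] hx] /=.
case/and5P: hx => _ _ h3 _ /andP[_ h6]; rewrite /pm /pi /= in h3 h6 *.
by rewrite Tp_iter.
Qed.

Lemma Tper x k : iter k T x = x <-> (pd (val x) * pm (val x) %| k).
Proof.
rewrite -(Tp_period k (valP x)) -val_iterT; split => [->|/eqP E] //.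
exact: val_inj.
Qed.

Lemma Qper x k : iter k (quotT T) (Gorbit act x) = Gorbit act x <-> (pm (val x) %| k).
Proof.
rewrite iter_quot Gorbit_eq key_iter.
case: x => [[[[[[C d] m] j] A] i] hx] /=.
case/and5P: hx => _ _ h3 _ /andP[_ h6]; rewrite /pm /pi /key /= in h3 h6 *.
rewrite -(modeq k h6); split => [[->]|/eqP ->] //.
Qed.

Lemma sum_pair (I J : finType) (G : I * J -> nat) :
  \sum_(q : I * J) G q = \sum_(i : I) \sum_(j : J) G (i, j).
Proof. by rewrite pair_bigA; apply: eq_bigr => [[]]. Qed.

Lemma sum_ord_cond N f k : f <= N -> \sum_(j < N) (if j < f then k else 0) = (f * k)%N.
Proof.
move=> fN; rewrite -big_mkcond /= -big_ord_widen //.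
by rewrite sum_nat_const card_ord.
Qed.

Lemma sum_Delta N (s : seq nat) (F : nat -> nat) : uniq s -> (forall d, d \in s -> d < N) ->
  \sum_(d < N) (if (d : nat) \in s then F d else 0) = \sum_(d <- s) F d.
Proof.
move=> us sN; rewrite -big_mkcond /= -(big_mkord (fun d => d \in s)) -big_filter.
apply: perm_big; apply: uniq_perm; rewrite ?filter_uniq ?iota_uniq //.
move=> d; rewrite mem_filter mem_iota /= add0n.
by case ds: (d \in s) => //=; rewrite subn0 (sN _ ds).
Qed.

Lemma count_idx N2 (P : {set {set gT}} -> nat -> bool) (f : {set {set gT}} -> nat -> nat)
  (Bs : {set {set gT}} -> nat -> {set {set gT}}) :
  (forall C (d : 'I_Dmax.+1), f C d <= N2) ->
  #|[pred q : {set {set gT}} * 'I_Dmax.+1 * 'I_N2 * {set gT} |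
     [&& q.1.1.1 \in Pbar gT, (q.1.1.2 : nat) \in Delta (rep q.1.1.1), P q.1.1.1 q.1.1.2,
         (q.1.2 : nat) < f q.1.1.1 q.1.1.2 & q.2 \in Bs q.1.1.1 q.1.1.2]]|
  = \sum_(C in Pbar gT) \sum_(d <- Delta (rep C)) (if P C d then (f C d * #|Bs C d|)%N else 0).
Proof.
move=> fN2; rewrite -sum1_card big_mkcond /= sum_pair sum_pair sum_pair.
rewrite [RHS]big_mkcond /=; apply: eq_bigr => C _.
case: (boolP (C \in Pbar gT)) => hC; last first.
  by apply: big1 => d _; apply: big1 => j _; apply: big1 => B _; rewrite inE /= (negbTE hC).
have u1 : uniq (Delta (rep C)) by apply: undup_uniq.
have b1 : forall d, d \in Delta (rep C) -> d < Dmax.+1.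
  by move=> d dD; rewrite ltnS; exact: (Delta_le dD).
rewrite -(@sum_Delta Dmax.+1 _ _ u1 b1).
apply: eq_bigr => d _.
case: (boolP ((d : nat) \in Delta (rep C))) => hD; last first.
  by apply: big1 => j _; apply: big1 => B _; rewrite inE /= hC (negbTE hD).
case: (boolP (P C d)) => hP; last first.
  by apply: big1 => j _; apply: big1 => B _; rewrite inE /= hC hD (negbTE hP).
rewrite -(sum_ord_cond _ (fN2 C d)); apply: eq_big => // j _.
case: (boolP ((j : nat) < f C d)) => hj; last first.
  by apply: big1 => B _; rewrite inE /= hC hD hP (negbTE hj).
rewrite -sum1_card [RHS]big_mkcond /=; apply: eq_bigr => B _.
by rewrite inE /= hC hD hP hj.
Qed.

Definition Kg (C : {set {set gT}}) (d : nat) : {group gT} := (<[uu C d]> <*> rep C)%G.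

Lemma Delta_gt0 (H : {group gT}) d : d \in Delta H -> 0 < d.
Proof. by rewrite /Delta mem_undup => /mapP [x _ ->]; apply: order_gt0. Qed.

Lemma K_eq C d : (Kg C d : {set gT}) = <[uu C d]> * rep C.
Proof. by rewrite /Kg /= norm_joinEl // cycle_subG uu_norm. Qed.

Lemma card_K C d : d \in Delta (rep C) -> #|Kg C d| = (#|rep C| * d)%N.
Proof.
move=> dD; have uN := uu_norm C d.
have sHK : rep C \subset Kg C d by apply: joing_subr.
have nHK : (Kg C d : {set gT}) \subset 'N(rep C).
  by rewrite join_subG cycle_subG uN normG.
rewrite -(Lagrange sHK) -card_quotient // K_eq quotientMidr quotient_cycle //.
by rewrite -orderE uu_order.
Qed.

Lemma theta_K C d : d \in Delta (rep C) -> #|lcosets (Kg C d) [set: gT]| = theta (rep C) d.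
Proof.
move=> dD; rewrite card_lcosets /theta -!divgS ?subsetT // card_K // divnMA.
by [].
Qed.

Lemma lcosN (H : {group gT}) r x : x \in 'N(H) -> (r *: H) :* x = (r * x) *: H.
Proof. by move=> xN; rewrite lcosetM -mulgA norm_rlcoset. Qed.

Lemma lcos_repr (H : {group gT}) A : A \in lcosets H [set: gT] -> A = repr A *: H.
Proof.
case/lcosetsP => a _ ->; apply/esym/lcoset_eqP.
by apply: mem_repr (lcoset_refl H a).
Qed.

Lemma lcos_common (K : {group gT}) B B' x : B \in lcosets K [set: gT] ->
  B' \in lcosets K [set: gT] -> x \in B -> x \in B' -> B = B'.
Proof.
case/lcosetsP => a _ -> /lcosetsP [a' _ ->] /lcoset_eqP <- /lcoset_eqP <-.
by [].
Qed.

Lemma repr_in (K : {group gT}) B : B \in lcosets K [set: gT] -> repr B \in B.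
Proof. by case/lcosetsP => a _ ->; apply: mem_repr (lcoset_refl K a). Qed.

Lemma sub_lcosK (H K : {group gT}) r v y : H \subset K -> v \in K ->
  y \in (r * v) *: H -> y \in r *: K.
Proof.
move=> sHK vK /lcosetP [h hH ->]; rewrite mem_lcoset -!mulgA mulKg.
by rewrite groupM // (subsetP sHK).
Qed.

Section CountT.
Variable n : nat.
Hypothesis n0 : 0 < n.

Definition N2T := \max_(C : {set {set gT}}) \max_(d < Dmax.+1) b C d (n %/ d).
Definition IT := ({set {set gT}} * 'I_Dmax.+1 * 'I_N2T * {set gT})%type.
Definition condT (q : IT) : bool :=
  [&& q.1.1.1 \in Pbar gT, (q.1.1.2 : nat) \in Delta (rep q.1.1.1),
      (q.1.1.2 : nat) %| n, (q.1.2 : nat) < b q.1.1.1 q.1.1.2 (n %/ q.1.1.2)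
    & q.2 \in lcosets (Kg q.1.1.1 q.1.1.2) [set: gT]].
Definition FT := {q : IT | condT q}.

Definition preT (q : FT) : Pre :=
  ((val q).1.1.1, ((val q).1.1.2 : nat), n %/ (val q).1.1.2, ((val q).1.2 : nat),
   repr (val q).2 *: rep (val q).1.1.1, 0).

Lemma preT_valid q : valid (preT q).
Proof.
case: q => [[[[C d] j] B] hq]; have := hq; rewrite /condT /= => /and5P[hC hD hdn hj hB].
have d0 := Delta_gt0 hD.
apply/and5P; split => //; rewrite /preT /pC /pd /pm /pj /pA /pi /=.
- by rewrite divn_gt0 // dvdn_leq.
- apply/andP; split; last by rewrite divn_gt0 // dvdn_leq.
  by apply/lcosetsP; exists (repr B).
Qed.

Definition phiT (q : FT) : X := insubd p0 (preT q).
Lemma phiT_val q : val (phiT q) = preT q.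
Proof. exact: insubdK (preT_valid q). Qed.

Lemma cardFT : #|{: FT}| = seq_a b n.
Proof.
rewrite card_sig.
rewrite (@count_idx N2T (fun C d => d %| n) (fun C d => b C d (n %/ d))
           (fun C d => lcosets (Kg C d) [set: gT])); last first.
  move=> C d; apply: leq_trans (leq_bigmax C).
  exact: (@leq_bigmax _ (fun d : 'I_Dmax.+1 => b C d (n %/ d)) d).
apply: eq_bigr => C _; apply: eq_big_seq => d dD.
by case: ifP => // _; rewrite theta_K // mulnC.
Qed.

Lemma T_per_phi q : iter n T (phiT q) = phiT q.
Proof.
apply/Tper; rewrite phiT_val /preT /pd /pm /=.
case: q => [[[[C d] j] B] hq]; have := hq; rewrite /condT /= => /and5P[_ _ hdn _ _].
by rewrite mulnC divnK.
Qed.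

Lemma T_exact_phi q t : 0 < t < n -> iter t T (phiT q) <> phiT q.
Proof.
move=> /andP[t0 tn] /Tper; rewrite phiT_val /preT /pd /pm /=.
case: q => [[[[C d] j] B] hq]; have := hq; rewrite /condT /= => /and5P[_ _ hdn _ _].
rewrite mulnC divnK // => /(dvdn_leq t0); lia.
Qed.

Lemma T_dist_phi q q' t : iter t T (phiT q) = phiT q' -> q = q'.
Proof.
move=> E.
have Ek := f_equal (fun x => key (val x)) E.
have EA := f_equal (fun x => pA (val x)) E.
rewrite /= key_iter !phiT_val in Ek.
rewrite /= val_iterT !phiT_val in EA.
case: q q' E Ek EA => [[[[C d] j] B] hq] [[[[C' d'] j'] B'] hq'] _.
have := hq; rewrite /condT /= => /and5P[hC hD hdn hj hB].
have := hq'; rewrite /condT /= => /and5P[hC' hD' hdn' hj' hB'].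
have d0 := Delta_gt0 hD.
have m0 : 0 < n %/ d by rewrite divn_gt0 // dvdn_leq.
rewrite /preT /key /= => [[eC ed _ ej _]].
rewrite /preT /= Tp_iter // /pA /= => EA.
move: hC' hD' hdn' hj' hB' hq' EA; rewrite -eC -ed -ej => hC' hD' hdn' hj' hB' hq' EA.
have eB : B = B'.
  apply: (@lcos_common (Kg C d) _ _ (repr B')) => //; last exact: repr_in hB'.
  have : repr B' \in repr B' *: rep C by apply: lcoset_refl.
  rewrite -EA lcosN; last by rewrite groupX // uu_norm.
  move/(@sub_lcosK (rep C) (Kg C d)); rewrite -lcos_repr //; apply.
    exact: joing_subr.
  by rewrite groupX // (subsetP (joing_subl _ _)) // cycle_id.
move: hq'; rewrite -eB -(val_inj ed) -(val_inj ej) => hq'.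
by rewrite (bool_irrelevance hq' hq).
Qed.

Lemma T_all_phi y : iter n T y = y -> (forall t, 0 < t < n -> iter t T y <> y) ->
  exists q t, y = iter t T (phiT q).
Proof.
move=> /Tper Hn Hex.
have Hdm := proj2 (Tper y _) (dvdnn (pd (val y) * pm (val y))).
case: y Hn Hex Hdm => [[[[[[C d] m] j] A] i] hy]; rewrite /pd /pm /= => Hn Hex Hdm.
have := hy; case/and5P => hC hD m0 hj /andP[hA im]; rewrite /pC /pd /pm /pj /pA /pi /= in hC hD m0 hj hA im.
have d0 := Delta_gt0 hD.
have dmn : (d * m)%N = n.
  have := dvdn_leq n0 Hn; case: (ltngtP (d * m) n) => // h _.
  by exfalso; apply: (Hex _ _ Hdm); rewrite h muln_gt0 d0 m0.
have ndm : n %/ d = m by rewrite -dmn mulKn.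
have hd : d < Dmax.+1 by rewrite ltnS; exact: (Delta_le hD).
have hjN : j < N2T.
  apply: leq_trans (leq_bigmax C); apply: leq_trans _ (@leq_bigmax _ (fun d : 'I_Dmax.+1 => b C d (n %/ d)) (Ordinal hd)).
  by rewrite /= ndm.
pose B := repr A *: Kg C d.
have hq : condT (C, Ordinal hd, Ordinal hjN, B).
  rewrite /condT /= hC hD -{1}dmn dvdn_mulr //= ndm hj /=.
  by apply/lcosetsP; exists (repr A).
exists (exist (fun q : IT => condT q) _ hq).
have : repr B \in B by apply: repr_in; apply/lcosetsP; exists (repr A).
rewrite {2}/B mem_lcoset K_eq => /mulsgP [v h /cycleP [s ->] hH Ev].
exists ((s * d.-1) * m + i)%N.
apply: val_inj; rewrite val_iterT phiT_val /preT /= ndm Tp_iter //.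
rewrite add0n divnMDl // (divn_small im) addn0 modnMDl (modn_small im).
congr (_, _, _).
have -> : repr B = repr A * (uu C d ^+ s * h) by rewrite -Ev mulKVg.
rewrite mulgA lcosetM (lcoset_id hH) lcosN; last by rewrite groupX // uu_norm.
rewrite -mulgA -expgD.
have -> : (s + s * d.-1 = s * d)%N by rewrite -{2}(prednK d0) mulnS.
rewrite lcosetM lcoset_id; first by rewrite -lcos_repr.
by rewrite pow_inH // dvdn_mull.
Qed.

Lemma count_T : On_eq (fun _ : X => True) T n (seq_a b n).
Proof.
rewrite -cardFT; apply: (@period_count _ _ T n _ phiT n0) => //.
- exact: T_per_phi.
- exact: T_exact_phi.
- exact: T_dist_phi.
- by move=> y _; apply: T_all_phi.
Qed.

End CountT.

Section CountQ.
Variable n : nat.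
Hypothesis n0 : 0 < n.

Definition N2Q := \max_(C : {set {set gT}}) \max_(d < Dmax.+1) b C d n.
Definition IQ := ({set {set gT}} * 'I_Dmax.+1 * 'I_N2Q * {set gT})%type.
Definition condQ (q : IQ) : bool :=
  [&& q.1.1.1 \in Pbar gT, (q.1.1.2 : nat) \in Delta (rep q.1.1.1), true,
      (q.1.2 : nat) < b q.1.1.1 q.1.1.2 n
    & q.2 \in [set (set0 : {set gT})]].
Definition FQ := {q : IQ | condQ q}.

Definition preQ (q : FQ) : Pre :=
  ((val q).1.1.1, ((val q).1.1.2 : nat), n, ((val q).1.2 : nat), (rep (val q).1.1.1 : {set gT}), 0).

Lemma preQ_valid q : valid (preQ q).
Proof.
case: q => [[[[C d] j] B] hq]; have := hq; rewrite /condQ /= => /and4P[hC hD hj hB].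
apply/and5P; split => //; rewrite /preQ /pC /pd /pm /pj /pA /pi /=.
by rewrite n0 andbT; apply/lcosetsP; exists 1; rewrite ?inE // lcoset1.
Qed.

Definition xQ (q : FQ) : X := insubd p0 (preQ q).
Lemma xQ_val q : val (xQ q) = preQ q.
Proof. exact: insubdK (preQ_valid q). Qed.
Definition phiQ (q : FQ) := Gorbit act (xQ q).

Lemma cardFQ : #|{: FQ}| = seq_b b n.
Proof.
rewrite card_sig.
rewrite (@count_idx N2Q (fun C d => true) (fun C d => b C d n)
           (fun C d => [set (set0 : {set gT})])); last first.
  move=> C d; apply: leq_trans (leq_bigmax C).
  exact: (@leq_bigmax _ (fun d : 'I_Dmax.+1 => b C d n) d).
apply: eq_bigr => C _; apply: eq_bigr => d _.
by rewrite cards1 muln1.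
Qed.

Lemma count_Q : On_eq (is_Gorbit act) (quotT T) n (seq_b b n).
Proof.
rewrite -cardFQ; apply: (@period_count _ _ (quotT T) n _ phiQ n0).
- by move=> q; exists (xQ q).
- by move=> q; apply/Qper; rewrite xQ_val /pm /=.
- move=> q t /andP[t0 tn] /Qper; rewrite xQ_val /pm /= => /(dvdn_leq t0); lia.
- move=> q q' t; rewrite /phiQ iter_quot => /Gorbit_eq; rewrite key_iter !xQ_val /key /preQ /=.
  case: q q' => [[[[C d] j] B] hq] [[[[C' d'] j'] B'] hq'] /=.
  have := hq; rewrite /condQ /= => /and4P[_ _ _ hB].
  have := hq'; rewrite /condQ /= => /and4P[_ _ _ hB'].
  move=> E; have E1 := f_equal (fun k => k.1) E; move: E1 => /= [eC ed ej].
  rewrite inE in hB; rewrite inE in hB'.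
  apply: val_inj => /=.
  by rewrite -eC -(val_inj ed) -(val_inj ej) (eqP hB') (eqP hB).
- move=> Y [x ->] Hn Hex.
  have Hm := proj2 (Qper x _) (dvdnn (pm (val x))).
  move/Qper: Hn => Hn.
  case: x Hn Hex Hm => [[[[[[C d] m] j] A] i] hy]; rewrite /pm /= => Hn Hex Hm.
  have := hy; case/and5P => hC hD m0 hj /andP[hA im]; rewrite /pC /pd /pm /pj /pA /pi /= in hC hD m0 hj hA im.
  have mn : m = n.
    have := dvdn_leq n0 Hn; case: (ltngtP m n) => // h _.
    by exfalso; apply: (Hex _ _ Hm); rewrite h m0.
  subst m.
  have hd : d < Dmax.+1 by rewrite ltnS; exact: (Delta_le hD).
  have hjN : j < N2Q.
    apply: leq_trans (leq_bigmax C); apply: leq_trans _ (@leq_bigmax _ (fun d : 'I_Dmax.+1 => b C d n) (Ordinal hd)).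
    by [].
  have hq : condQ (C, Ordinal hd, Ordinal hjN, set0).
    by rewrite /condQ /= hC hD hj inE eqxx.
  exists (exist (fun q : IQ => condQ q) _ hq); exists i.
  rewrite /phiQ iter_quot; apply/Gorbit_eq; rewrite key_iter xQ_val /key /preQ /=.
  by rewrite add0n (modn_small im).
Qed.

End CountQ.

End Model.

Unset Implicit Arguments.
Set Strict Implicit.

Theorem proposition10 (gT : finGroupType)
    (b : {set {set gT}} -> nat -> nat -> nat)
    (hb : (1 <= b ([set: gT] :^: [set: gT])%g 1%N 1%N)%N) :
  exists (X : Type) (d : X -> X -> R) (T : X -> X) (act : gT -> X -> X),
    is_metric d /\ m_compact d /\ m_homeomorphism d T /\
    commuting_action d act T /\
    forall n : nat, (1 <= n)%N ->
      On_eq (fun _ : X => True) T n (seq_a b n) /\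
      On_eq (is_Gorbit act) (quotT T) n (seq_b b n).
Proof.
exists (X b), (dist hb), (@T gT b), (@act gT b).
split; first exact: dist_metric.
split; first exact: X_compact.
split.
  exists (@Ti gT b); split; first exact: TK.
  split; first exact: TiK.
  split; apply: iso_cont.
  - exact: can_inj (@TK gT b).
  - exact: T_p0.
  - exact: lev_T.
  - exact: can_inj (@TiK gT b).
  - exact: Ti_p0.
  - exact: lev_Ti.
split.
  split; first exact: act1.
  split; first exact: actM.
  split; last exact: actT.
  move=> g; apply: iso_cont.
  - exact: act_inj.
  - exact: act_p0.
  - exact: lev_act.
move=> n n0; split; [exact: count_T | exact: count_Q].
Qed.
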